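(* Let $\mathcal H$ be a separable complex Hilbert space, $A\in L(\mathcal H)^+$ and $B\in L(\mathcal H)$ with closed range. Then $B$ admits an $A$-inverse if and only if the pair $(A,R(B))$ is compatible.
   Context: $\|z\|_A=\langle Az,z\rangle^{1/2}$. $G\in L(\mathcal H)$ is an $A$-inverse of $B$ if for every $y\in\mathcal H$, $\|y-BGy\|_A\le\|y-Bx\|_A$ for all $x\in\mathcal H$. $(A,\mathcal S)$ is compatible if there exists $Q\in L(\mathcal H)$ with $Q^2=Q$, $R(Q)=\mathcal S$, $AQ=Q^*A$. *)

(* Defs.v *)
From HB Require Import structures.
From mathcomp Require Import all_boot all_order all_algebra.
From mathcomp Require Import reals.
From mathcomp Require Export complex.
Set Implicit Arguments. Unset Strict Implicit. Unset Printing Implicit Defensive.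
Import Order.TTheory GRing.Theory Num.Theory.
Local Open Scope ring_scope.

Section Hilbert.
Variables (R : realType) (V : lmodType R[i]) (ip : V -> V -> R[i]).

Definition inner_product_axioms : Prop :=
  [/\ (forall (a : R[i]) (x y z : V), ip (a *: x + y) z = a * ip x z + ip y z),
      (forall x y : V, ip x y = ((ip y x)^*)%C),
      (forall x : V, 0 <= ip x x) &
      (forall x : V, ip x x = 0 -> x = 0)].

Definition hnorm (x : V) : R := Num.sqrt (complex.Re (ip x x)).

Definition hconverges (u : nat -> V) (l : V) : Prop :=
  forall e : R, 0 < e -> exists N : nat, forall n, (N <= n)%N -> hnorm (u n - l) < e.

Definition hcauchy (u : nat -> V) : Prop :=
  forall e : R, 0 < e -> exists N : nat, forall m n, (N <= m)%N -> (N <= n)%N ->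
    hnorm (u m - u n) < e.

Definition is_hilbert : Prop :=
  inner_product_axioms /\ forall u, hcauchy u -> exists l, hconverges u l.

Definition hseparable : Prop :=
  exists d : nat -> V, forall (x : V) (e : R), 0 < e -> exists n, hnorm (x - d n) < e.

Definition bounded_op (T : V -> V) : Prop :=
  (forall (a : R[i]) (x y : V), T (a *: x + y) = a *: T x + T y) /\
  exists M : R, forall x, hnorm (T x) <= M * hnorm x.

Definition positive_op (A : V -> V) : Prop :=
  bounded_op A /\ forall x, 0 <= ip (A x) x.

Definition range (T : V -> V) : V -> Prop := fun y => exists x, T x = y.

Definition closed_range (T : V -> V) : Prop :=
  forall (u : nat -> V) (y : V), hconverges (fun n => T (u n)) y -> range T y.

Definition is_adjoint (T Ts : V -> V) : Prop :=
  forall x y, ip (T x) y = ip x (Ts y).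

Definition Anorm (A : V -> V) (z : V) : R := Num.sqrt (complex.Re (ip (A z) z)).

Definition is_A_inverse (A B G : V -> V) : Prop :=
  bounded_op G /\
  forall y x, Anorm A (y - B (G y)) <= Anorm A (y - B x).

Definition compatible (A : V -> V) (S : V -> Prop) : Prop :=
  exists Q : V -> V, bounded_op Q /\
    (forall x, Q (Q x) = Q x) /\
    (forall y, range Q y <-> S y) /\
    exists Qs : V -> V, bounded_op Qs /\ is_adjoint Q Qs /\
      forall x, A (Q x) = Qs (A x).

End Hilbert.

(* Main.v *)
Require Import Defs.
From HB Require Import structures.
From mathcomp Require Import all_boot all_order all_algebra.
From mathcomp Require Import reals complex.
From mathcomp Require classical_sets.
From mathcomp Require Import lra ring zify.
From Stdlib Require Import IndefiniteDescription Classical.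
Set Implicit Arguments. Unset Strict Implicit. Unset Printing Implicit Defensive.
Import Order.TTheory GRing.Theory Num.Theory.
Local Open Scope ring_scope.


Section CplxFacts.
Variable R : rcfType.
Implicit Types x y : R[i].
Lemma cReD x y : complex.Re (x + y) = complex.Re x + complex.Re y.
Proof. by case: x => a b; case: y => c d. Qed.
Lemma cImD x y : complex.Im (x + y) = complex.Im x + complex.Im y.
Proof. by case: x => a b; case: y => c d. Qed.
Lemma cReN x : complex.Re (- x) = - complex.Re x.
Proof. by case: x => a b. Qed.
Lemma cImN x : complex.Im (- x) = - complex.Im x.
Proof. by case: x => a b. Qed.
Lemma cReM x y : complex.Re (x * y) = complex.Re x * complex.Re y - complex.Im x * complex.Im y.
Proof. by case: x => a b; case: y => c d. Qed.
Lemma cImM x y : complex.Im (x * y) = complex.Re x * complex.Im y + complex.Im x * complex.Re y.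
Proof. by case: x => a b; case: y => c d. Qed.
Lemma cReJ x : complex.Re (x^*)%C = complex.Re x.
Proof. by case: x. Qed.
Lemma cImJ x : complex.Im (x^*)%C = - complex.Im x.
Proof. by case: x. Qed.
Lemma cReR (r : R) : complex.Re (r%:C)%C = r. Proof. by []. Qed.
Lemma cImR (r : R) : complex.Im (r%:C)%C = 0. Proof. by []. Qed.
Lemma cRe0 : complex.Re (0 : R[i]) = 0. Proof. by []. Qed.
Lemma cIm0 : complex.Im (0 : R[i]) = 0. Proof. by []. Qed.
Lemma cRe1 : complex.Re (1 : R[i]) = 1. Proof. by []. Qed.
Lemma cIm1 : complex.Im (1 : R[i]) = 0. Proof. by []. Qed.
Lemma cReI : complex.Re ('i%C : R[i]) = 0. Proof. by []. Qed.
Lemma cImI : complex.Im ('i%C : R[i]) = 1. Proof. by []. Qed.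
Lemma ceqP x y : complex.Re x = complex.Re y -> complex.Im x = complex.Im y -> x = y.
Proof. by case: x => a b; case: y => c d /= -> ->. Qed.
Lemma cge0 x : 0 <= x -> complex.Im x = 0 /\ 0 <= complex.Re x.
Proof. by rewrite lecE => /andP[/eqP h h2]; split. Qed.
End CplxFacts.

Section Basics.
Variables (R : realType) (V : lmodType R[i]) (ip : V -> V -> R[i]).
Hypothesis hip : inner_product_axioms ip.

Local Notation Re := complex.Re.
Local Notation Im := complex.Im.
Local Notation hn := (hnorm ip).
Definition nsq (x : V) := Re (ip x x).

Lemma ipDl x y z : ip (x + y) z = ip x z + ip y z.
Proof. by case: hip => H _ _ _; rewrite -[x]scale1r H mul1r scale1r. Qed.
Lemma ip0l z : ip 0 z = 0.
Proof. by apply: (addrI (ip 0 z)); rewrite -ipDl !addr0. Qed.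
Lemma ipZl a x z : ip (a *: x) z = a * ip x z.
Proof. by case: hip => H _ _ _; rewrite -[a *: x]addr0 H ip0l addr0. Qed.
Lemma ipNl x z : ip (- x) z = - ip x z.
Proof. by rewrite -scaleN1r ipZl mulN1r. Qed.
Lemma ipBl x y z : ip (x - y) z = ip x z - ip y z.
Proof. by rewrite ipDl ipNl. Qed.
Lemma ipC x y : ip x y = ((ip y x)^*)%C.
Proof. by case: hip. Qed.
Lemma ipDr x y z : ip z (x + y) = ip z x + ip z y.
Proof. by rewrite ipC ipDl rmorphD /= -!ipC. Qed.
Lemma ip0r z : ip z 0 = 0.
Proof. by rewrite ipC ip0l conjc0. Qed.
Lemma ipZr a x z : ip z (a *: x) = (a^*)%C * ip z x.
Proof. by rewrite ipC ipZl rmorphM /= -ipC. Qed.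
Lemma ipNr x z : ip z (- x) = - ip z x.
Proof. by rewrite ipC ipNl rmorphN /= -ipC. Qed.
Lemma ipBr x y z : ip z (x - y) = ip z x - ip z y.
Proof. by rewrite ipDr ipNr. Qed.

Lemma ReipC x y : Re (ip x y) = Re (ip y x).
Proof. by rewrite ipC cReJ. Qed.
Lemma ImipC x y : Im (ip x y) = - Im (ip y x).
Proof. by rewrite ipC cImJ. Qed.

Lemma n2_ge0 x : 0 <= nsq x.
Proof. by case: hip => _ _ H _; case: (cge0 (H x)). Qed.
Lemma ip_self x : ip x x = (nsq x)%:C%C.
Proof. by case: hip => _ _ H _; case: (cge0 (H x)) => h _; apply: ceqP. Qed.
Lemma n2_eq0 x : nsq x = 0 -> x = 0.
Proof. by case: hip => _ _ _ H h; apply: H; rewrite ip_self h. Qed.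
Lemma n20 : nsq 0 = 0.
Proof. by rewrite /nsq ip0l. Qed.

Lemma hn_sq x : hn x ^+ 2 = nsq x.
Proof. by rewrite /hnorm sqr_sqrtr // n2_ge0. Qed.
Lemma hn_ge0 x : 0 <= hn x.
Proof. exact: sqrtr_ge0. Qed.
Lemma hn_eq0 x : hn x = 0 -> x = 0.
Proof. by move=> h; apply: n2_eq0; rewrite -hn_sq h expr0n. Qed.
Lemma hn0 : hn 0 = 0.
Proof. by rewrite /hnorm ip0l sqrtr0. Qed.

Lemma n2D x y : nsq (x + y) = nsq x + 2 * Re (ip x y) + nsq y.
Proof.
rewrite /nsq ipDl !ipDr !cReD (ReipC y x); lra.
Qed.
Lemma n2N x : nsq (- x) = nsq x.
Proof. by rewrite /nsq ipNl ipNr opprK. Qed.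
Lemma n2B x y : nsq (x - y) = nsq x - 2 * Re (ip x y) + nsq y.
Proof. by rewrite n2D n2N ipNr cReN; lra. Qed.
Lemma n2Z a x : nsq (a *: x) = (Re a ^+ 2 + Im a ^+ 2) * nsq x.
Proof.
rewrite /nsq ipZl ipZr ip_self !cReM !cImM cReJ cImJ /=; lra.
Qed.
Lemma hnN x : hn (- x) = hn x.
Proof. by rewrite /hnorm -/(nsq _) n2N. Qed.
Lemma hnB x y : hn (x - y) = hn (y - x).
Proof. by rewrite -hnN opprB. Qed.
Lemma hnZ a x : hn (a *: x) = Num.sqrt (Re a ^+ 2 + Im a ^+ 2) * hn x.
Proof. by rewrite /hnorm -!/(nsq _) n2Z sqrtrM // addr_ge0 // sqr_ge0. Qed.
Lemma hnZr (r : R) x : hn ((r%:C)%C *: x) = `|r| * hn x.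
Proof. by rewrite hnZ /= expr0n addr0 sqrtr_sqr. Qed.

Lemma hn_i x : hn ('i%C *: x) = hn x.
Proof. by rewrite hnZ /= expr0n add0r expr1n sqrtr1 mul1r. Qed.

Lemma CS_sq x y : Re (ip x y) ^+ 2 <= nsq x * nsq y.
Proof.
have h := n2_ge0 ((nsq x)%:C%C *: y - (Re (ip x y))%:C%C *: x).
rewrite n2B !n2Z ipZl ipZr /= cReM cImM /= in h.
have [x0|xn0] := eqVneq (nsq x) 0.
  by move/n2_eq0: x0 => ->; rewrite /nsq !ip0l mul0r expr0n.
have xp : 0 < nsq x by rewrite lt0r xn0 n2_ge0.
rewrite ReipC in h.
have : 0 <= nsq x * (nsq x * nsq y - Re (ip x y) ^+ 2).
  move: h; rewrite cReM /= (ReipC y x).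
  set a := Re (ip x y); set b := nsq x; set c := nsq y.
  rewrite !expr0n /= !addr0 !mul0r !oppr0 ?subr0 ?mul0r ?addr0; nra.
by rewrite pmulr_rge0 // subr_ge0.
Qed.
Lemma CS x y : Re (ip x y) <= hn x * hn y.
Proof.
have h := CS_sq x y.
rewrite -!hn_sq -exprMn in h.
have := hn_ge0 x; have := hn_ge0 y.
move: h; set a := Re _; set b := hn x * hn y => h h1 h2.
have hb : 0 <= b by rewrite mulr_ge0.
have [a0|a0] := lerP a 0; first by apply: le_trans hb.
by rewrite -(ler_pXn2r (_ : (0 < 2)%N)) // ?nnegrE ?ltW.
Qed.
Lemma CSabs x y : `|Re (ip x y)| <= hn x * hn y.
Proof.
have [a0|a0] := lerP 0 (Re (ip x y)); first by rewrite ger0_norm // CS.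
by rewrite ltr0_norm // -cReN -ipNr (le_trans (CS _ _)) // hnN.
Qed.
Lemma hnD x y : hn (x + y) <= hn x + hn y.
Proof.
rewrite -(ler_pXn2r (_ : (0 < 2)%N)) ?nnegrE ?addr_ge0 ?hn_ge0 //.
rewrite hn_sq n2D sqrrD !hn_sq.
have := CS x y; lra.
Qed.
Lemma hnDB x y z : hn (x - z) <= hn (x - y) + hn (y - z).
Proof. by rewrite (le_trans _ (hnD _ _)) // addrA subrK. Qed.
Lemma hn_le_n2 x c : 0 <= c -> (hn x <= c) = (nsq x <= c ^+ 2).
Proof. by move=> c0; rewrite -hn_sq ler_pXn2r ?nnegrE ?hn_ge0. Qed.

Lemma ip_eq x y : (forall z, Re (ip x z) = Re (ip y z)) -> x = y.
Proof.
move=> h; apply/eqP; rewrite -subr_eq0; apply/eqP/n2_eq0.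
by rewrite /nsq ipBl cReD cReN h subrr.
Qed.
Lemma ip_Re_Im x y : Im (ip x y) = - Re (ip ('i%C *: x) y).
Proof. by rewrite ipZl cReM /=; lra. Qed.

End Basics.


Lemma choice_fun {A B : Type} (P : A -> B -> Prop) :
  (forall a, exists b, P a b) -> exists f : A -> B, forall a, P a (f a).
Proof.
move=> H; exists (fun a => proj1_sig (constructive_indefinite_description _ (H a))).
by move=> a; case: (constructive_indefinite_description _ _).
Qed.

Section Reals.
Variable R : realType.
Lemma le_eps (a b : R) : (forall e, 0 < e -> a <= b + e) -> a <= b.
Proof.
move=> h; rewrite leNgt; apply/negP => ab.
have := h ((a - b) / 2); rewrite divr_gt0 ?subr_gt0 // => /(_ isT); lra.
Qed.
Lemma arch (e : R) : 0 < e -> exists N : nat, (N.+1%:R)^-1 < e.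
Proof.
move=> e0; exists (Num.trunc e^-1).
by rewrite -ltf_pV2 ?posrE ?invr_gt0 // invrK truncnS_gt.
Qed.
Definition tw (n : nat) : R := (2%:R ^+ n)^-1.
Lemma tw_gt0 n : 0 < tw n.
Proof. by rewrite /tw invr_gt0 exprn_gt0. Qed.
Lemma twS n : tw n.+1 = tw n / 2.
Proof. by rewrite /tw exprS invfM mulrC. Qed.
Lemma tw0 : tw 0 = 1.
Proof. by rewrite /tw expr0 invr1. Qed.
Lemma tw_le n : tw n <= (n.+1%:R)^-1.
Proof.
rewrite /tw lef_pV2 ?posrE ?exprn_gt0 ?ltr0n //.
by rewrite -natrX ler_nat ltn_expl.
Qed.
Lemma tw_small (e : R) : 0 < e -> exists N, forall n, (N <= n)%N -> tw n < e.
Proof.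
move=> /arch[N hN]; exists N => n Nn; apply: le_lt_trans (tw_le n) _.
apply: le_lt_trans hN; rewrite lef_pV2 ?posrE ?ltr0n // ler_nat; lia.
Qed.
Lemma tw_mono m n : (m <= n)%N -> tw n <= tw m.
Proof.
move=> /subnK <-; elim: (n - m)%N => [|k IH]; first by rewrite add0n.
by rewrite addSn twS; apply: le_trans IH; have := tw_gt0 (k + m); lra.
Qed.
Lemma var_lemma (a c : R) : 0 <= c -> (forall t, 0 <= - (2 * t * a) + t ^+ 2 * c) -> a = 0.
Proof.
move=> c0 h; have := h (a / (c + 1)).
set s := (c + 1)^-1.
have s0 : 0 < s by rewrite invr_gt0; lra.
have sc : s * (c + 1) = 1 by rewrite mulVf //; lra.
have sc1 : s * c < 1 by nra.
move=> H.
have : 0 <= a ^+ 2 * s * (- 2 + s * c).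
  by have -> : a ^+ 2 * s * (- 2 + s * c) = - (2 * (a * s) * a) + (a * s) ^+ 2 * c by rewrite /s; ring.
move=> H2; have : a ^+ 2 * s <= 0 by nra.
move=> H3; have : a ^+ 2 <= 0 by nra.
by move=> H4; apply/eqP; rewrite -sqrf_eq0 eq_le H4 sqr_ge0.
Qed.
Lemma lin_lemma (a b : R) : (forall t, 0 <= b - 2 * t * a) -> a = 0.
Proof.
move=> h; have [//|a0] := eqVneq a 0; exfalso.
have a2 : 0 < a ^+ 2 by rewrite exprn_even_gt0.
have := h ((`|b| + 1) / a ^+ 2 * a).
have -> : 2 * ((`|b| + 1) / a ^+ 2 * a) * a = 2 * (`|b| + 1) * (a ^+ 2 / a ^+ 2).
  by rewrite expr2; field.
rewrite mulfV ?gt_eqF // mulr1.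
have := ler_norm b; have := normr_ge0 b; lra.
Qed.
End Reals.


Section Hilb.
Variables (R : realType) (V : lmodType R[i]) (ip : V -> V -> R[i]).
Hypothesis hip : inner_product_axioms ip.
Hypothesis hcomp : forall u, hcauchy ip u -> exists l, hconverges ip u l.

Local Notation Re := complex.Re.
Local Notation Im := complex.Im.
Local Notation hn := (hnorm ip).
Local Notation n2 := (nsq ip).

Definition close (K : V -> Prop) :=
  forall y, (forall e, 0 < e -> exists z, K z /\ hn (z - y) < e) -> K y.
Definition subsp (K : V -> Prop) :=
  K 0 /\ forall a x y, K x -> K y -> K (a *: x + y).
Definition lin (T : V -> V) := forall (a : R[i]) x y, T (a *: x + y) = a *: T x + T y.

Section LinOps.
Variable T : V -> V.
Hypothesis hT : lin T.
Lemma lin0 : T 0 = 0.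
Proof. by apply: (addrI (T 0)); rewrite -{1}(scale1r (T 0)) -hT scale1r !addr0. Qed.
Lemma linD x y : T (x + y) = T x + T y.
Proof. by rewrite -{1}[x]scale1r hT scale1r. Qed.
Lemma linZ a x : T (a *: x) = a *: T x.
Proof. by rewrite -[a *: x]addr0 hT lin0 addr0. Qed.
Lemma linN x : T (- x) = - T x.
Proof. by rewrite -scaleN1r linZ scaleN1r. Qed.
Lemma linB x y : T (x - y) = T x - T y.
Proof. by rewrite linD linN. Qed.
End LinOps.

Lemma bnd_pos T : bounded_op ip T -> exists M, 0 < M /\ forall x, hn (T x) <= M * hn x.
Proof.
case=> _ [M hM]; exists (`|M| + 1); split; first by have := normr_ge0 M; lra.
move=> x; apply: le_trans (hM x) _; apply: ler_wpM2r; first exact: hn_ge0.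
by have := ler_norm M; lra.
Qed.

Lemma subspD K x y : subsp K -> K x -> K y -> K (x + y).
Proof. by case=> _ h kx ky; rewrite -[x]scale1r; apply: h. Qed.
Lemma subspZ K a x : subsp K -> K x -> K (a *: x).
Proof. by case=> h0 h kx; rewrite -[_ *: _]addr0; apply: h. Qed.
Lemma subspN K x : subsp K -> K x -> K (- x).
Proof. by move=> hK kx; rewrite -scaleN1r; apply: subspZ. Qed.
Lemma subspB K x y : subsp K -> K x -> K y -> K (x - y).
Proof. by move=> hK kx ky; apply: subspD => //; apply: subspN. Qed.

Lemma hn_lt_n2 x c : 0 <= c -> (hn x < c) = (n2 x < c ^+ 2).
Proof. by move=> c0; rewrite -hn_sq // ltr_pXn2r ?nnegrE ?hn_ge0. Qed.

Lemma n2_scale2 v : n2 ((2%:R : R)%:C%C *: v) = 4%:R * n2 v.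
Proof. rewrite n2Z //=; ring. Qed.

Lemma scale2 (v : V) : (2%:R : R)%:C%C *: v = v + v.
Proof.
have -> : (2%:R : R)%:C%C = 1 + 1 by apply: ceqP => /=; lra.
by rewrite scalerDl scale1r.
Qed.

Lemma Re_ipZr_real (t : R) v k : Re (ip v ((t%:C)%C *: k)) = t * Re (ip v k).
Proof. by rewrite ipZr // conjc_real cReM /=; lra. Qed.
Lemma Re_ipZr_i v k : Re (ip v ('i%C *: k)) = Im (ip v k).
Proof. by rewrite ipZr // cReM /=; lra. Qed.

Lemma orth_from_Re K v : subsp K -> (forall k, K k -> Re (ip v k) = 0) ->
  forall k, K k -> ip v k = 0.
Proof.
move=> hK h k kk; apply: ceqP; first by rewrite h.
by rewrite -Re_ipZr_i h //; apply: subspZ.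
Qed.

Lemma proj_ex K : subsp K -> close K -> forall u,
  exists p, K p /\ forall k, K k -> ip (u - p) k = 0.
Proof.
move=> hK cK u.
pose E := fun r : R => exists k, K k /\ r = n2 (u - k).
have E0 : exists r, E r by exists (n2 (u - 0)), 0; split => //; case: hK.
have Elb : classical_sets.has_lbound E by exists 0 => r [k [_ ->]]; apply: n2_ge0.
pose d := inf E.
have hd : forall k, K k -> d <= n2 (u - k).
  by move=> k kk; apply: (ge_inf Elb); exists k.
have d0 : 0 <= d by apply: lb_le_inf => // r [k [_ ->]]; apply: n2_ge0.
have : forall n, exists k, K k /\ n2 (u - k) < d + tw R n.
  move=> n; have [r [k [kk ->]] hr] := inf_adherent (tw_gt0 R n) (conj E0 Elb).
  by exists k.
case/choice_fun => kf hkf.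
have par : forall m n, n2 (kf m - kf n) <= 2 * tw R m + 2 * tw R n.
  move=> m n.
  have [km hm] := hkf m; have [kn hn'] := hkf n.
  pose w := (2%:R : R)^-1%:C%C *: (kf n + kf m).
  have kw : K w by apply: subspZ => //; apply: subspD.
  have e1 : (u - kf n) + (u - kf m) = (2%:R : R)%:C%C *: (u - w).
    by rewrite scalerBr /w scalerA -rmorphM /= mulfV ?pnatr_eq0 // scale1r scale2 opprD addrACA.
  have e2 : (u - kf n) - (u - kf m) = kf m - kf n by rewrite opprB addrC addrA subrK.
  have := n2D hip (u - kf n) (u - kf m); have := n2B hip (u - kf n) (u - kf m).
  rewrite e1 e2 n2_scale2 => h1 h2.
  have := hd w kw; lra.
have cauchy : hcauchy ip kf.
  move=> e e0.
  have e20 : 0 < e ^+ 2 / 4%:R by rewrite divr_gt0 ?exprn_gt0.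
  have [N hN] := tw_small e20.
  exists N => m n hm hn2.
  rewrite hn_lt_n2 ?ltW //.
  have := hN m hm; have := hN n hn2; have := par m n; lra.
have [p hp] := hcomp cauchy.
have kp : K p.
  apply: cK => e e0; have [N hN] := hp e e0; exists (kf N); split; first by case: (hkf N).
  exact: hN.
have minp : n2 (u - p) <= d.
  apply: le_eps => eta eta0.
  set C := d + 2.
  have C0 : 0 <= C by rewrite /C; lra.
  have del0 : 0 < Num.min 1 (eta / (2 * (2 * C + 1))).
    by rewrite lt_min ltr01 /= divr_gt0 // mulr_gt0 //; lra.
  have [N1 hN1] := hp _ del0.
  have eta2 : 0 < eta / 2 by rewrite divr_gt0.
  have [N2 hN2] := tw_small eta2.
  pose n := maxn N1 N2.
  have h1 := hN1 n (leq_maxl _ _); have h2 := hN2 n (leq_maxr _ _).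
  set del := hn (kf n - p) in h1.
  have [_ hkn] := hkf n.
  have ed : u - p = (u - kf n) + (kf n - p) by rewrite addrA subrK.
  rewrite ed n2D //.
  have hcs := CS hip (u - kf n) (kf n - p).
  have hb : hn (u - kf n) <= C.
    have t1 : tw R n <= 1.
      apply: le_trans (tw_le R n) _; by rewrite invf_le1 ?ler1n ?ltr0n.
    have h3 : hn (u - kf n) ^+ 2 <= d + 1 by rewrite hn_sq //; lra.
    have h4 := sqr_ge0 (hn (u - kf n) - 1).
    have h5 : hn (u - kf n) ^+ 2 - 2 * hn (u - kf n) + 1 = (hn (u - kf n) - 1) ^+ 2 by ring.
    rewrite /C; lra.
  have hd0 : 0 <= del by apply: hn_ge0.
  have hdel : n2 (kf n - p) = del ^+ 2 by rewrite hn_sq.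
  move: h1; rewrite lt_min => /andP[hd1 hd2].
  have : del * (2 * C + 1) < eta / 2.
    rewrite ltr_pdivlMr ?mulr_gt0 // in hd2; last by lra.
    by move: hd2; rewrite mulrA; nra.
  have : hn (u - kf n) * del <= C * del by apply: ler_wpM2r.
  have : del ^+ 2 <= del by rewrite expr2; nra.
  rewrite -/del hdel in hcs *; lra.
exists p; split => //.
apply: orth_from_Re => // k kk.
apply: (@var_lemma _ _ (n2 k)); first exact: n2_ge0.
move=> t.
have kt : K (p + (t%:C)%C *: k) by apply: subspD => //; apply: subspZ.
have := hd _ kt.
have -> : u - (p + (t%:C)%C *: k) = (u - p) - (t%:C)%C *: k by rewrite opprD addrA.
rewrite n2B // n2Z // Re_ipZr_real /= expr0n addr0 => h.
lra.
Qed.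

End Hilb.


Section Hilb2.
Variables (R : realType) (V : lmodType R[i]) (ip : V -> V -> R[i]).
Hypothesis hip : inner_product_axioms ip.
Hypothesis hcomp : forall u, hcauchy ip u -> exists l, hconverges ip u l.

Local Notation Re := complex.Re.
Local Notation Im := complex.Im.
Local Notation hn := (hnorm ip).
Local Notation n2 := (nsq ip).
Local Notation close := (close ip).

Lemma ip_eqr a b : (forall x, ip x a = ip x b) -> a = b.
Proof. by move=> h; apply: (ip_eq hip) => z; rewrite (ReipC hip a) (ReipC hip b) h. Qed.

Lemma proj_uniq K u p p' : subsp K -> K p -> K p' ->
  (forall k, K k -> ip (u - p) k = 0) -> (forall k, K k -> ip (u - p') k = 0) -> p = p'.
Proof.
move=> hK kp kp' h h'; apply/eqP; rewrite -subr_eq0; apply/eqP/(n2_eq0 hip).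
have e : p - p' = (u - p') - (u - p) by rewrite opprB [RHS]addrC addrA subrK.
have kd : K (p - p') by apply: subspB.
by rewrite /nsq {1}e ipBl // h' // h // subrr.
Qed.

Lemma proj_op K : subsp K -> close K -> exists P : V -> V,
  [/\ lin P, (forall u, K (P u)), (forall u k, K k -> ip (u - P u) k = 0),
      (forall k, K k -> P k = k) &
      (forall u, hn (P u) <= hn u /\ hn (u - P u) <= hn u)].
Proof.
move=> hK cK; have /choice_fun [P hP] := proj_ex hip hcomp hK cK.
have PK u : K (P u) by case: (hP u).
have Po u k : K k -> ip (u - P u) k = 0 by case: (hP u) => _; apply.
exists P; split => //.
- move=> a x y; apply: (proj_uniq hK (PK _) _ (Po _)).
    by apply: subspD => //; apply: subspZ.
  move=> k kk.
  rewrite (_ : _ - _ = a *: (x - P x) + (y - P y)); last first.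
    by rewrite scalerBr opprD addrACA.
  by rewrite ipDl // ipZl // !Po // mulr0 addr0.
- move=> k kk; apply: (proj_uniq hK (PK k) kk (Po k)) => k' _; by rewrite subrr ip0l.
- move=> u.
  have e : n2 u = n2 (P u) + n2 (u - P u).
    have -> : n2 u = n2 (P u + (u - P u)) by rewrite addrC subrK.
    by rewrite n2D // (ReipC hip) Po // mulr0 addr0.
  have := n2_ge0 hip (P u); have := n2_ge0 hip (u - P u) => h1 h2.
  by rewrite !hn_le_n2 ?hn_ge0 // hn_sq //; split; lra.
Qed.

Lemma riesz (f : V -> R[i]) : (forall a x y, f (a *: x + y) = a * f x + f y) ->
  (exists M, forall x, Re (f x) <= M * hn x) -> exists z, forall x, f x = ip x z.
Proof.
move=> fl [M0 hM0].
have f0 : f 0 = 0.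
  by apply: (addrI (f 0)); rewrite -{1}(mul1r (f 0)) -fl scale1r !addr0.
have fZ a x : f (a *: x) = a * f x by rewrite -[a *: x]addr0 fl f0 addr0.
have fD x y : f (x + y) = f x + f y by have := fl 1 x y; rewrite scale1r mul1r.
have fN x : f (- x) = - f x by rewrite -scaleN1r fZ mulN1r.
pose M := `|M0| + 1.
have M0p : 0 < M by rewrite /M; have := normr_ge0 M0; lra.
have hM x : Re (f x) <= M * hn x.
  apply: le_trans (hM0 x) _; apply: ler_wpM2r; first exact: hn_ge0.
  by have := ler_norm M0; rewrite /M; lra.
have hMa x : `|Re (f x)| <= M * hn x.
  have h1 := hM x; have h2 := hM (- x).
  rewrite fN cReN (hnN hip) in h2.
  by rewrite ler_norml; apply/andP; split; lra.
have hMi x : `|Im (f x)| <= M * hn x.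
  have h := hMa ('i%C *: x).
  by rewrite fZ cReM /= (hn_i hip) mul0r mul1r sub0r normrN in h.
pose K := fun x => f x = 0.
have hK : subsp K by split => [|a x y]; rewrite /K ?f0 // => hx hy; rewrite fl hx hy mulr0 addr0.
have cK : close K.
  move=> y hy; rewrite /K.
  have key (g : R[i] -> R) : (forall x, `|g (f x)| <= M * hn x) ->
      (forall c, g (- c) = - g c) -> g (f y) = 0.
    move=> hg gN; apply/eqP; rewrite -normr_le0; apply: le_eps => e e0.
    have [z [kz hz]] := hy (e / M) (divr_gt0 e0 M0p).
    have e1 : f (z - y) = - f y by rewrite fD fN kz add0r.
    have := hg (z - y); rewrite e1 gN normrN => h.
    rewrite add0r; apply: (le_trans h); rewrite -ler_pdivlMl // mulrC; exact: ltW.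
  apply: ceqP; rewrite ?cRe0 ?cIm0.
    by apply: key => //; apply: cReN.
  by apply: key => //; apply: cImN.
have [P [Pl PK Po Pid _]] := proj_op hK cK.
case: (classic (exists u, f u <> 0)) => [[u fu]|nf]; last first.
  exists 0 => x; rewrite ip0r //; apply: NNPP => h; apply: nf; by exists x.
pose w := u - P u.
have fw : f w = f u by rewrite /w fD fN (PK u) oppr0 addr0.
have wn0 : (n2 w)%:C%C != 0.
  apply/negP => /eqP h; apply: fu; rewrite -fw.
  have : n2 w = 0 by case: h.
  by move/(n2_eq0 hip) => ->.
exists (((f w / (n2 w)%:C%C)^*)%C *: w) => x.
rewrite ipZr // conjcK.
pose v := f w *: x - f x *: w.
have kv : K v by rewrite /K /v fD fN !fZ mulrC subrr.
have h1 : ip v w = 0 by rewrite ipC // (Po u v kv) conjc0.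
have h2 : ip v w = f w * ip x w - f x * (n2 w)%:C%C.
  by rewrite /v (ipBl hip) !(ipZl hip) (ip_self hip).
rewrite h2 in h1.
have h3 : f w * ip x w = f x * (n2 w)%:C%C by apply/eqP; rewrite -subr_eq0 h1.
by rewrite mulrAC h3 mulfK.
Qed.

End Hilb2.


Section Hilb3.
Variables (R : realType) (V : lmodType R[i]) (ip : V -> V -> R[i]).
Hypothesis hip : inner_product_axioms ip.
Hypothesis hcomp : forall u, hcauchy ip u -> exists l, hconverges ip u l.

Local Notation Re := complex.Re.
Local Notation Im := complex.Im.
Local Notation hn := (hnorm ip).
Local Notation n2 := (nsq ip).
Local Notation close := (close ip).

Lemma adj_ex T : bounded_op ip T -> exists Ts, bounded_op ip Ts /\ is_adjoint ip T Ts.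
Proof.
move=> hT; have [M [M0 hM]] := bnd_pos hT; have Tl : lin T by case: hT.
have : forall y, exists z, forall x, ip (T x) y = ip x z.
  move=> y; apply: riesz => //.
    by move=> a x x'; rewrite Tl (ipDl hip) (ipZl hip).
  exists (M * hn y) => x; apply: le_trans (CS hip _ _) _.
  rewrite mulrAC; apply: ler_wpM2r; [exact: hn_ge0 | exact: hM].
case/choice_fun => Ts hTs.
have Tsl : lin Ts.
  move=> a y y'; apply: (ip_eqr hip) => x.
  by rewrite -hTs (ipDr hip) (ipZr hip) !hTs -(ipZr hip) -(ipDr hip).
exists Ts; split => //; split => //.
exists M => y.
set h := hn (Ts y).
have e : h ^+ 2 <= M * h * hn y.
  rewrite /h (hn_sq hip) /nsq -hTs.
  apply: le_trans (CS hip _ _) _; apply: ler_wpM2r; [exact: hn_ge0 | exact: hM].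
have h0 : 0 <= h by apply: hn_ge0.
have y0 := hn_ge0 ip y.
have [hz|hp] := eqVneq h 0; first by rewrite hz; nra.
have hp' : 0 < h by rewrite lt0r hp.
by rewrite -(ler_pM2l hp') -expr2; nra.
Qed.

Lemma pos_selfadj (A : V -> V) : lin A -> (forall x, 0 <= ip (A x) x) ->
  forall x y, ip (A x) y = ip x (A y).
Proof.
move=> Al Ap.
have Im0 x : Im (ip (A x) x) = 0 by case: (cge0 (Ap x)).
have key x y : Im (ip (A x) y) = - Im (ip (A y) x).
  have := Im0 (x + y).
  rewrite (linD Al) !(ipDl hip) !(ipDr hip) !cImD Im0 Im0; lra.
move=> x y.
have k2 := key x ('i%C *: y).
rewrite (linZ Al) (ipZl hip) (ipZr hip) cImM cImM /= in k2.
rewrite (ipC hip x); apply: ceqP; rewrite ?cReJ ?cImJ; last exact: key.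
lra.
Qed.

Lemma ker_subsp (T : V -> V) : lin T -> subsp (fun x => T x = 0).
Proof.
move=> Tl; split; first exact: lin0.
by move=> a x y hx hy; rewrite Tl hx hy scaler0 addr0.
Qed.

Lemma ker_close T : bounded_op ip T -> close (fun x => T x = 0).
Proof.
move=> hT; have [M [M0 hM]] := bnd_pos hT; have Tl : lin T by case: hT.
move=> y hy; apply: (hn_eq0 hip); apply/eqP; rewrite eq_le hn_ge0 andbT.
apply: le_eps => e e0; rewrite add0r.
have [z [kz hz]] := hy (e / M) (divr_gt0 e0 M0).
have : T y = - T (z - y) by rewrite (linB Tl) kz sub0r opprK.
move=> ->; rewrite (hnN hip); apply: le_trans (hM _) _.
by rewrite -ler_pdivlMl // mulrC ltW.
Qed.

Lemma range_subsp (T : V -> V) : lin T -> subsp (range T).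
Proof.
move=> Tl; split; first by exists 0; apply: lin0.
by move=> a _ _ [x <-] [y <-]; exists (a *: x + y); rewrite Tl.
Qed.

Lemma closeI (K1 K2 : V -> Prop) : close K1 -> close K2 -> close (fun x => K1 x /\ K2 x).
Proof.
move=> c1 c2 y hy; split.
  by apply: c1 => e e0; have [z [[k1 _] hz]] := hy e e0; exists z.
by apply: c2 => e e0; have [z [[_ k2] hz]] := hy e e0; exists z.
Qed.

Lemma subspI (K1 K2 : V -> Prop) : subsp K1 -> subsp K2 -> subsp (fun x => K1 x /\ K2 x).
Proof.
case=> a1 b1 [a2 b2]; split => // a x y [] ? ? [] ? ?; split; [exact: b1 | exact: b2].
Qed.

Lemma closed_range_close B : closed_range ip B -> close (range B).
Proof.
move=> hB y hy.
have : forall n, exists x, hn (B x - y) < (n.+1%:R)^-1.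
  move=> n; have hn0 : 0 < (n.+1%:R : R)^-1 by rewrite invr_gt0 ltr0Sn.
  by have [_ [[x <-] hz]] := hy _ hn0; exists x.
case/choice_fun => u hu; apply: (hB u) => e e0.
have [N hN] := arch e0; exists N => n Nn; apply: lt_trans (hu n) _.
apply: le_lt_trans hN; rewrite lef_pV2 ?posrE ?ltr0n // ler_nat; lia.
Qed.

End Hilb3.


Fixpoint rec {T : Type} (x0 : T) (f : nat -> T -> T) (k : nat) : T :=
  match k with 0 => x0 | k'.+1 => f k' (rec x0 f k') end.

Section Baire.
Variables (R : realType) (V : lmodType R[i]) (ip : V -> V -> R[i]).
Hypothesis hip : inner_product_axioms ip.
Hypothesis hcomp : forall u, hcauchy ip u -> exists l, hconverges ip u l.

Local Notation Re := complex.Re.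
Local Notation Im := complex.Im.
Local Notation hn := (hnorm ip).
Local Notation n2 := (nsq ip).
Local Notation close := (close ip).

Lemma baire (W : nat -> V -> Prop) : (forall n, close (W n)) -> (forall y, exists n, W n y) ->
  exists n y0 r, 0 < r /\ forall y, hn (y - y0) < r -> W n y.
Proof.
move=> hc hcov; apply: NNPP => H.
have hnot n y0 r : 0 < r -> exists y, hn (y - y0) < r /\ ~ W n y.
  move=> r0; apply: NNPP => h2; apply: H; exists n, y0, r; split => // y hy.
  by apply: NNPP => hw; apply: h2; exists y.
have hopen n y : ~ W n y -> exists rho, 0 < rho /\ forall z, W n z -> rho <= hn (z - y).
  move=> nw; apply: NNPP => h; apply: nw; apply: (hc n) => e e0.
  apply: NNPP => h2; apply: h; exists e; split => // z wz.
  by rewrite leNgt; apply/negP => hz; apply: h2; exists z.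
have : forall p : nat * (V * R), exists q : V * R, 0 < p.2.2 ->
   [/\ 0 < q.2, q.2 <= p.2.2 / 2, hn (q.1 - p.2.1) <= p.2.2 / 2 &
       forall z, hn (z - q.1) <= q.2 -> ~ W p.1 z].
  move=> [n [c r]] /=.
  case: (boolP (0 < r)) => r0; last by exists (0, 1) => h; exfalso; move/negP: r0; apply.
  have r20 : 0 < r / 2 by rewrite divr_gt0.
  have [y [hy ny]] := hnot n c _ r20.
  have [rho [rho0 hrho]] := hopen n y ny.
  exists (y, Num.min (r / 2) (rho / 2)) => _ /=; split.
  - by rewrite lt_min r20 divr_gt0.
  - by rewrite ge_min lexx.
  - exact: ltW.
  - move=> z hz wz; have := hrho z wz; move: hz; rewrite le_min => /andP[_ h]; lra.
case/choice_fun => st hst.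
pose sq := rec (0 : V, 1 : R) (fun k p => st (k, p)).
pose c k := (sq k).1; pose r k := (sq k).2.
have sqS k : sq k.+1 = st (k, sq k) by [].
have inv k : 0 < r k /\ r k <= tw R k.
  elim: k => [|k [IH1 IH2]]; first by rewrite /r /= tw0; split => //; lra.
  have [h1 h2 _ _] := hst (k, sq k) IH1.
  rewrite /r sqS; split => //; rewrite twS; apply: le_trans h2 _.
  by rewrite -/(r k); lra.
have rpos k : 0 < r k by case: (inv k).
have step k : hn (c k.+1 - c k) <= r k / 2 /\ r k.+1 <= r k / 2.
  by have [_ h2 h3 _] := hst (k, sq k) (rpos k); rewrite /c /r sqS.
have dist k m : (k <= m)%N -> hn (c m - c k) <= r k - r m.
  elim: m => [|m IH]; first by rewrite leqn0 => /eqP ->; rewrite subrr hn0 //; lra.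
  rewrite leq_eqVlt => /orP[/eqP ->|]; first by rewrite subrr hn0 //; lra.
  rewrite ltnS => /IH h.
  have [s1 s2] := step m.
  apply: le_trans (hnDB hip _ (c m) _) _; lra.
have cauchy : hcauchy ip c.
  move=> e e0; have [N hN] := tw_small (divr_gt0 e0 (ltr0Sn R 1)).
  exists N => m n hm hn'.
  apply: le_lt_trans (hnDB hip _ (c N) _) _.
  rewrite (hnB hip (c N)).
  have := dist N m hm; have := dist N n hn'; have := hN N (leqnn N).
  have := rpos m; have := rpos n; have := inv N; lra.
have [cl hcl] := hcomp cauchy.
have near k : hn (cl - c k.+1) <= r k.+1.
  apply: le_eps => eta eta0.
  have [N hN] := hcl eta eta0.
  pose m := maxn N k.+1.
  apply: le_trans (hnDB hip _ (c m) _) _.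
  rewrite (hnB hip cl).
  have := hN m (leq_maxl _ _); have := dist k.+1 m (leq_maxr _ _); have := rpos m; lra.
have [n wn] := hcov cl.
have [_ _ _ h4] := hst (n, sq n) (rpos n).
by apply: (h4 cl) => //; have := near n; rewrite /c /r sqS.
Qed.

End Baire.


Section OpenMap.
Variables (R : realType) (V : lmodType R[i]) (ip : V -> V -> R[i]).
Hypothesis hip : inner_product_axioms ip.
Hypothesis hcomp : forall u, hcauchy ip u -> exists l, hconverges ip u l.

Local Notation Re := complex.Re.
Local Notation Im := complex.Im.
Local Notation hn := (hnorm ip).
Local Notation n2 := (nsq ip).
Local Notation close := (close ip).

Variables (B Q : V -> V).
Hypotheses (hB : bounded_op ip B) (hQ : bounded_op ip Q).
Hypothesis QS : forall y, range B (Q y).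
Hypothesis Qid : forall x, Q (B x) = B x.

Lemma open_L1 : exists n : nat, exists r, 0 < r /\ forall s, range B s -> hn s < r ->
  forall e, 0 < e -> exists x, hn x < (2 * n)%:R /\ hn (B x - s) < e.
Proof.
have [MQ [MQ0 hMQ]] := bnd_pos hQ; have Ql : lin Q by case: hQ.
have Bl : lin B by case: hB.
pose W n y := forall e, 0 < e -> exists x, hn x < n%:R /\ hn (B x - Q y) < e.
have cW n : close (W n).
  move=> y hy e e0.
  have [z [wz hz]] := hy (e / 2 / MQ) (divr_gt0 (divr_gt0 e0 (ltr0Sn R 1)) MQ0).
  have [x [hx1 hx2]] := wz (e / 2) (divr_gt0 e0 (ltr0Sn R 1)).
  exists x; split => //.
  apply: le_lt_trans (hnDB hip _ (Q z) _) _.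
  have : hn (Q z - Q y) <= MQ * hn (z - y) by rewrite -(linB Ql); apply: hMQ.
  rewrite ltr_pdivlMr // mulrC in hz.
  lra.
have cov y : exists n, W n y.
  have [x0 hx0] := QS y.
  exists (Num.trunc (hn x0)).+1 => e e0; exists x0; split; first exact: truncnS_gt.
  by rewrite hx0 subrr hn0.
have [n [y0 [r [r0 hr]]]] := baire hip hcomp cW cov.
exists n, r; split => // s [xs <-] hs e e0.
have w1 : W n (y0 + B xs) by apply: hr; rewrite addrAC subrr add0r.
have w2 : W n y0 by apply: hr; rewrite subrr hn0.
have [x1 [h11 h12]] := w1 (e / 2) (divr_gt0 e0 (ltr0Sn R 1)).
have [x2 [h21 h22]] := w2 (e / 2) (divr_gt0 e0 (ltr0Sn R 1)).
exists (x1 - x2); split.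
  apply: le_lt_trans (hnD hip _ _) _; rewrite (hnN hip) natrM.
  have -> : (2 : R) * n%:R = n%:R + n%:R by rewrite mulr2n mulrDl mul1r.
  lra.
rewrite (linD Ql) Qid in h12.
rewrite (linB Bl) addrAC.
apply: le_lt_trans (hnDB hip _ (Q y0) _) _.
rewrite (hnB hip (Q y0)).
have -> : B x1 - B xs - Q y0 = B x1 - (Q y0 + B xs) by rewrite opprD addrA addrAC.
lra.
Qed.

Lemma scaleRK (c : R) (v : V) : c != 0 -> ((c^-1)%:C%C *: ((c%:C)%C *: v)) = v.
Proof. by move=> c0; rewrite scalerA -rmorphM /= mulVf // scale1r. Qed.

Lemma open_L2 : exists K, 0 < K /\ forall s, range B s ->
  forall e, 0 < e -> exists x, hn x <= K * hn s /\ hn (B x - s) < e.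
Proof.
have Bl : lin B by case: hB.
have [n [r [r0 hr]]] := open_L1.
exists ((4 * n + 1)%:R / r); split; first by rewrite divr_gt0 // ltr0n addn1.
move=> s hs e e0.
have [s0|sn0] := eqVneq (hn s) 0.
  move/(hn_eq0 hip): s0 => ->; exists 0; rewrite hn0 // mulr0 (lin0 Bl) subrr hn0 //.
have sp : 0 < hn s by rewrite lt0r sn0 hn_ge0.
pose c := r / (2 * hn s).
have c0 : 0 < c by rewrite divr_gt0 // mulr_gt0.
have hs' : range B ((c%:C)%C *: s) by apply: subspZ => //; apply: range_subsp.
have hns' : hn ((c%:C)%C *: s) < r.
  rewrite (hnZr hip) gtr0_norm // /c.
  have -> : r / (2 * hn s) * hn s = r / 2 by field; rewrite sn0.
  lra.

have [x' [hx1 hx2]] := hr _ hs' hns' (c * e) (mulr_gt0 c0 e0).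
exists ((c^-1)%:C%C *: x'); split.
  rewrite (hnZr hip) gtr0_norm ?invr_gt0 //.
  have -> : c^-1 = hn s * (2 / r) by rewrite /c; field; rewrite sn0 gt_eqF.
  have ir : 0 < 2 / r by rewrite divr_gt0.
  have -> : (4 * n + 1)%:R / r * hn s = hn s * (2 / r) * ((4 * n + 1)%:R / 2).
    by field; rewrite gt_eqF.
  rewrite ler_pM2l ?mulr_gt0 //.
  rewrite natrM in hx1; rewrite natrD natrM.
  apply: le_trans (ltW hx1) _; lra.
  by rewrite invr_gt0.
rewrite (linZ Bl) -(scaleRK s (lt0r_neq0 c0)) -scalerBr (hnZr hip) gtr0_norm ?invr_gt0 //.
by rewrite ltr_pdivrMl // mulrC.
Qed.

Lemma open_map : exists C, 0 < C /\ forall s, range B s ->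
  exists x, B x = s /\ hn x <= C * hn s.
Proof.
have Bl : lin B by case: hB.
have [MB [MB0 hMB]] := bnd_pos hB.
have [K [K0 hK]] := open_L2.
exists (2 * K); split; first by rewrite mulr_gt0.
move=> s hs.
have [s0|sn0] := eqVneq (hn s) 0.
  move/(hn_eq0 hip): s0 => ->; exists 0; rewrite hn0 // mulr0 (lin0 Bl); split => //.
have sp : 0 < hn s by rewrite lt0r sn0 hn_ge0.
set sig := hn s.
have : forall p : V * nat, exists x, range B p.1 ->
    hn x <= K * hn p.1 /\ hn (B x - p.1) < sig * tw R p.2.+1.
  move=> [v k] /=; case: (classic (range B v)) => hv; last by exists 0.
  have [x hx] := hK v hv _ (mulr_gt0 sp (tw_gt0 R k.+1)); by exists x.
case/choice_fun => pk hpk.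
pose rs := rec s (fun k v => v - B (pk (v, k))).
pose xk k := pk (rs k, k).
have rsS k : rs k.+1 = rs k - B (xk k) by [].
have inv k : range B (rs k) /\ hn (rs k) <= sig * tw R k.
  elim: k => [|k [IH1 IH2]]; first by rewrite /= tw0 mulr1.
  have [h1 h2] := hpk (rs k, k) IH1.
  rewrite rsS; split.
    by apply: subspB => //; [apply: range_subsp | exists (xk k)].
  by rewrite -(hnN hip) opprB; apply: ltW.
have hxk k : hn (xk k) <= K * sig * tw R k.
  have [h1 h2] := hpk (rs k, k) (proj1 (inv k)).
  apply: le_trans h1 _; rewrite -mulrA ler_pM2l //; exact: (proj2 (inv k)).
pose X := rec 0 (fun k v => v + xk k).
have XS k : X k.+1 = X k + xk k by [].
have BX k : B (X k) = s - rs k.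
  elim: k => [|k IH]; first by rewrite /= subrr (lin0 Bl).
  by rewrite XS (linD Bl) IH rsS opprB [B _ - _]addrC addrA.
have dist l m : (l <= m)%N -> hn (X m - X l) <= 2 * K * sig * (tw R l - tw R m).
  elim: m => [|m IH]; first by rewrite leqn0 => /eqP ->; rewrite subrr hn0 // subrr mulr0.
  rewrite leq_eqVlt => /orP[/eqP ->|]; first by rewrite subrr hn0 // subrr mulr0.
  rewrite ltnS => /IH h.
  rewrite XS addrAC; apply: le_trans (hnD hip _ _) _.
  have := hxk m; rewrite twS; have := tw_gt0 R m.
  have KS : 0 < K * sig by rewrite mulr_gt0.
  move: h; set a := tw R l; set b := tw R m; set p := K * sig.
  rewrite -!mulrA -/p; nra.
have cauchy : hcauchy ip X.
  move=> e e0.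
  have e4 : 0 < e / (4 * K * sig) by rewrite divr_gt0 // !mulr_gt0.
  have [N hN] := tw_small e4.
  exists N => m n hm hn'.
  apply: le_lt_trans (hnDB hip _ (X N) _) _.
  rewrite (hnB hip (X N)).
  have := dist N m hm; have := dist N n hn'; have := hN N (leqnn N).
  have := tw_gt0 R m; have := tw_gt0 R n.
  rewrite ltr_pdivlMr ?mulr_gt0 //.
  have f1 : 0 <= K * sig * tw R n by rewrite ltW // !mulr_gt0 // tw_gt0.
  have f2 : 0 <= K * sig * tw R m by rewrite ltW // !mulr_gt0 // tw_gt0.
  have f3 : tw R N * (4 * K * sig) = 4 * (K * sig * tw R N) by ring.
  have f4 : 2 * K * sig * (tw R N - tw R n) = 2 * (K * sig * tw R N) - 2 * (K * sig * tw R n) by ring.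
  have f5 : 2 * K * sig * (tw R N - tw R m) = 2 * (K * sig * tw R N) - 2 * (K * sig * tw R m) by ring.
  rewrite f3 f4 f5; lra.
have [x hx] := hcomp cauchy.
exists x; split.
  apply/eqP; rewrite -subr_eq0; apply/eqP; apply: (hn_eq0 hip).
  apply/eqP; rewrite eq_le hn_ge0 andbT; apply: le_eps => eta eta0; rewrite add0r.
  have [N1 hN1] := hx (eta / 2 / MB) (divr_gt0 (divr_gt0 eta0 (ltr0Sn R 1)) MB0).
  have [N2 hN2] := tw_small (divr_gt0 (divr_gt0 eta0 (ltr0Sn R 1)) sp).
  pose m := maxn N1 N2.
  have h1 := hN1 m (leq_maxl _ _); have h2 := hN2 m (leq_maxr _ _).
  apply: le_trans (hnDB hip _ (B (X m)) _) _.
  rewrite -(linB Bl) (BX m) addrAC subrr add0r (hnN hip).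
  have := hMB (x - X m); rewrite (hnB hip x).
  have := proj2 (inv m).
  rewrite ltr_pdivlMr // in h1; rewrite ltr_pdivlMr // in h2.
  rewrite -/sig (mulrC _ sig) in h2; rewrite (mulrC _ MB) in h1.
  lra.
apply: le_eps => eta eta0.
have [N hN] := hx eta eta0.
have e : x = (x - X N) + X N by rewrite subrK.
rewrite {1}e; apply: le_trans (hnD hip _ _) _.
have := dist 0 N (leq0n N); rewrite /= subr0 tw0 => hd.
rewrite (hnB hip x); have := hN N (leqnn N).
have f1 : 0 <= K * sig * tw R N by rewrite ltW // !mulr_gt0 // tw_gt0.
have f2 : 2 * K * sig * (1 - tw R N) = 2 * K * sig - 2 * (K * sig * tw R N) by ring.
rewrite f2 in hd; lra.
Qed.

End OpenMap.


Section Main.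
Variables (R : realType) (V : lmodType R[i]) (ip : V -> V -> R[i]).
Hypothesis hip : inner_product_axioms ip.
Hypothesis hcomp : forall u, hcauchy ip u -> exists l, hconverges ip u l.

Local Notation Re := complex.Re.
Local Notation Im := complex.Im.
Local Notation hn := (hnorm ip).
Local Notation n2 := (nsq ip).
Local Notation close := (close ip).

Variable A : V -> V.
Hypothesis hA : positive_op ip A.

Definition nA x := Re (ip (A x) x).

Let Al : lin A. Proof. by case: hA => [[]]. Qed.
Let Asa : forall x y, ip (A x) y = ip x (A y).
Proof. by apply: pos_selfadj => //; case: hA. Qed.

Lemma nA_ge0 x : 0 <= nA x.
Proof. by case: hA => _ h; case: (cge0 (h x)). Qed.

Lemma nAD x y : nA (x + y) = nA x + 2 * Re (ip (A x) y) + nA y.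
Proof.
have h : Re (ip (A y) x) = Re (ip (A x) y) by rewrite Asa (ReipC hip).
rewrite /nA (linD Al) (ipDl hip) !(ipDr hip) !cReD h; lra.
Qed.

Lemma nAZr (t : R) x : nA ((t%:C)%C *: x) = t ^+ 2 * nA x.
Proof.
rewrite /nA (linZ Al) (ipZl hip) (ipZr hip) conjc_real mulrA !cReM /=; ring.
Qed.

Lemma Anorm_le a b : (Anorm ip A a <= Anorm ip A b) = (nA a <= nA b).
Proof. by rewrite /Anorm ler_sqrt // nA_ge0. Qed.

Lemma nA0_ker n : nA n = 0 -> A n = 0.
Proof.
move=> h.
have key y : Re (ip (A y) n) = 0.
  apply: (@lin_lemma _ _ (nA y)) => t.
  have := nA_ge0 (y + ((- t)%:C)%C *: n).
  rewrite nAD nAZr h mulr0 addr0 -(ReipC hip) -Asa (ReipC hip).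
  rewrite (linZ Al) (ipZr hip) conjc_real cReM /= -Asa mul0r subr0; lra.
apply: (ip_eq hip) => z; rewrite (ip0l hip) cRe0 Asa (ReipC hip).
exact: key.
Qed.

Variable B : V -> V.
Hypothesis hB : bounded_op ip B.
Let Bl : lin B. Proof. by case: hB. Qed.

Hypothesis hBcl : closed_range ip B.

Lemma dir1 G : is_A_inverse ip A B G -> compatible ip A (range B).
Proof.
case=> hG hmin.
have Gl : lin G by case: hG.
have [MB [MB0 hMB]] := bnd_pos hB; have [MG [MG0 hMG]] := bnd_pos hG.
have hS : subsp (range B) := range_subsp Bl.
have cS : close (range B) := closed_range_close hBcl.
have orthA y s : range B s -> ip (A (y - B (G y))) s = 0.
  move: s; apply: (orth_from_Re hip hS) => _ [x' <-].
  apply: (@var_lemma _ _ (nA (B x'))); first exact: nA_ge0.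
  move=> t.
  have := hmin y (G y + (t%:C)%C *: x'); rewrite Anorm_le.
  have -> : y - B (G y + (t%:C)%C *: x') = (y - B (G y)) + ((- t)%:C)%C *: B x'.
    by rewrite (linD Bl) (linZ Bl) opprD addrA rmorphN scaleNr.
  rewrite (nAD (y - B (G y))) nAZr (Re_ipZr_real hip) sqrrN; lra.
pose N := fun v => range B v /\ A v = 0.
have hN : subsp N := subspI hS (ker_subsp Al).
have cN : close N := closeI cS (ker_close hip (proj1 hA)).
have [P [Pl PK Po Pid Pn]] := proj_op hip hcomp hN cN.
pose Q y := B (G y) + P (y - B (G y)).
have BGl : lin (fun y => B (G y)) by move=> a y1 y2; rewrite Gl Bl.
have QS y : range B (Q y).
  by apply: subspD hS (ex_intro _ (G y) erefl) (proj1 (PK _)).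
have Qfix s : range B s -> Q s = s.
  move=> hs; pose d := s - B (G s).
  have Sd : range B d by apply: subspB hS hs (ex_intro _ (G s) erefl).
  have Ad : A d = 0 by apply: nA0_ker; rewrite /nA orthA.
  by rewrite /Q -/d (Pid d (conj Sd Ad)) /d addrC subrK.
have Ql : lin Q.
  move=> a y1 y2; rewrite /Q (BGl a y1 y2).
  have -> : a *: y1 + y2 - (a *: B (G y1) + B (G y2)) =
            a *: (y1 - B (G y1)) + (y2 - B (G y2)).
    by rewrite scalerBr opprD addrACA.
  by rewrite Pl scalerDr addrACA.
have hQ : bounded_op ip Q.
  split => //; exists (2 * (MB * MG) + 1) => y.
  have h1 : hn (B (G y)) <= MB * MG * hn y.
    apply: le_trans (hMB _) _; rewrite -mulrA ler_pM2l //; exact: hMG.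
  apply: le_trans (hnD hip _ _) _.
  have h3 := proj1 (Pn (y - B (G y))).
  have := hnD hip y (- B (G y)); rewrite (hnN hip) => h2.
  have := hn_ge0 ip y; rewrite mulrDl mul1r -!mulrA; rewrite -mulrA in h1; lra.
have orthQ z s : range B s -> ip (A (z - Q z)) s = 0.
  move=> hs; rewrite /Q opprD addrA (linB Al) (proj2 (PK _)) subr0; exact: orthA.
have [Qs [hQs adj]] := adj_ex hip hcomp hQ.
exists Q; split => //; split; first by move=> x; apply: Qfix.
split.
  move=> y; split; first by case=> x <-.
  by move=> hy; exists y; apply: Qfix.
exists Qs; split => //; split => // x.
apply: (ip_eq hip) => z.
rewrite (ReipC hip (Qs (A x))) -adj (ReipC hip (Q z)).
have ez : z = Q z + (z - Q z) by rewrite addrC subrK.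
have o1 : Re (ip (A (Q x)) (z - Q z)) = 0.
  by rewrite Asa (ReipC hip) orthQ.
have o2 : Re (ip (A (x - Q x)) (Q z)) = 0 by rewrite orthQ.
rewrite {1}ez (ipDr hip) cReD o1 addr0.
have ex : A x = A (Q x) + A (x - Q x) by rewrite -(linD Al) addrC subrK.
by rewrite ex (ipDl hip) cReD o2 addr0.
Qed.

Lemma dir2 : compatible ip A (range B) -> exists G, is_A_inverse ip A B G.
Proof.
case=> Q [hQ [QQ [QS' [Qs [hQs [adj AQ]]]]]].
have Ql : lin Q by case: hQ.
have [MQ [MQ0 hMQ]] := bnd_pos hQ.
have QS y : range B (Q y) by apply/QS'; exists y.
have Qid s : range B s -> Q s = s by move/QS' => [w <-]; rewrite QQ.
have [C [C0 hC]] := open_map hip hcomp hB hQ QS (fun x => Qid (B x) (ex_intro _ x erefl)).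
have [P [Pl PK Po Pid Pn]] := proj_op hip hcomp (ker_subsp Bl) (ker_close hip hB).
have : forall y, exists x, B x = Q y /\ hn x <= C * hn (Q y) by move=> y; apply: hC.
case/choice_fun => g hg.
pose G y := g y - P (g y).
have BG y : B (G y) = Q y by rewrite /G (linB Bl) (PK (g y)) subr0; case: (hg y).
exists G; split; [split|].
- move=> a y1 y2.
  pose w := g (a *: y1 + y2) - (a *: g y1 + g y2).
  have Bw : B w = 0.
    rewrite /w (linB Bl) (linD Bl) (linZ Bl).
    by rewrite -!/(B (g _)) !(proj1 (hg _)) Ql subrr.
  have ew : g (a *: y1 + y2) = (a *: g y1 + g y2) + w by rewrite /w [RHS]addrC subrK.
  rewrite /G ew (linD Pl) (Pid w Bw) Pl opprD addrACA subrr addr0.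
  by rewrite opprD addrACA -scalerBr.
- exists (C * MQ) => y.
  have [_ h] := hg y.
  apply: le_trans (proj2 (Pn (g y))) _.
  apply: le_trans h _; rewrite -mulrA ler_pM2l //; exact: hMQ.
- move=> y x; rewrite BG Anorm_le.
  have e : y - B x = (y - Q y) + (Q y - B x) by rewrite addrA subrK.
  rewrite [in X in _ <= X]e (nAD (y - Q y)).
  have -> : Re (ip (A (y - Q y)) (Q y - B x)) = 0.
    have [w hw] : range Q (Q y - B x).
      by apply/QS'; apply: subspB (range_subsp Bl) (QS y) (ex_intro _ x erefl).
    rewrite -hw (ReipC hip) adj -AQ (linB Ql) QQ subrr (lin0 Al) (ip0r hip).
    by [].
  by have := nA_ge0 (Q y - B x); lra.
Qed.

End Main.

Theorem mainTheorem13 (R : realType) (V : lmodType R[i]) (ip : V -> V -> R[i])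
  (hH : is_hilbert ip) (hsep : hseparable ip)
  (A B : V -> V) (hA : positive_op ip A) (hB : bounded_op ip B)
  (hBcl : closed_range ip B) :
  (exists G : V -> V, is_A_inverse ip A B G) <-> compatible ip A (range B).
Proof.
case: hH => hip hcomp; split.
- by case=> G hG; apply: (dir1 hip hcomp hA hB hBcl hG).
- by move=> hc; apply: (dir2 hip hcomp hA hB hc).
Qed.
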